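(* Let $X$ be a finite set with $|X|\geq 3$ and let $N,N'$ be binary level-1 networks on $X$ with $\mathcal R(N)\subseteq\mathcal R(N')$. Let $v$ be a split vertex of $N$ that is the head of a cut arc of $N$, and $v'$ a split vertex of $N'$ that is the head of a cut arc of $N'$. Then $C_N(v)$ and $C_{N'}(v')$ are compatible, i.e. $C_N(v)\cap C_{N'}(v')\in\{\emptyset,C_N(v),C_{N'}(v')\}$. Moreover, if $C_N(v)\subsetneq C_{N'}(v')$, then $C_N(v)$ is not a maximal SN-set of $\mathcal R(N)$.
   Context: A leaf of a DAG is a vertex of in-degree 1 and out-degree 0. For a finite set $X$, a phylogenetic network on $X$ is a DAG (no loops, no multiple arcs) with a unique vertex (the root) of in-degree 0, which has out-degree at least 2, whose set of leaves is $X$, and in which every other non-leaf vertex is either a split vertex (in-degree 1, out-degree $\geq 2$) or a hybrid vertex (in-degree $\geq 2$, out-degree $\geq 1$). It is binary if the root and all split vertices have out-degree 2 and every hybrid vertex has in-degree 2 and out-degree 1. $U(N)$ denotes the underlying undirected graph. A binary level-1 network is a binary phylogenetic network in which every biconnected component of $U(N)$ contains at most one hybrid vertex; by standing convention every cycle of $U(N)$ has at least four vertices. An arc is a cut arc if deleting it disconnects $U(N)$. For a vertex $v$, $C_N(v)$ is the set of leaves reachable from $v$ by a directed path. For distinct $a,b,c\in X$, the triplet $ab|c$ is consistent with $N$ if there exist distinct vertices $v,w$ of $N$ and directed paths from $v$ to $c$, from $v$ to $w$, from $w$ to $a$ and from $w$ to $b$ such that no two of these paths share an interior vertex; $\mathcal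 R(N)$ is the set of all triplets consistent with $N$. For a set $\mathcal R$ of triplets on $X$, a subset $S\subseteq X$ is an SN-set of $\mathcal R$ if there is no triplet $xy|z\in\mathcal R$ with $x,z\in S$ and $y\notin S$; it is non-trivial if $S\neq X$, and a non-trivial SN-set is maximal if no non-trivial SN-set strictly contains it. *)

(* Defs.v *)
From HB Require Import structures.
From mathcomp Require Import all_boot.
Set Implicit Arguments. Unset Strict Implicit. Unset Printing Implicit Defensive.

Record network (X : finType) := Network {
  vtx : finType;
  arc : rel vtx;
  lf : X -> vtx }.

Section Net.
Variables (X : finType) (N : network X).
Local Notation V := (vtx N).
Local Notation arcN := (@arc X N).
Local Notation lfN := (@lf X N).

Definition indeg (v : V) := #|[set u | arcN u v]|.
Definition outdeg (v : V) := #|[set w | arcN v w]|.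
Definition is_root (v : V) := indeg v == 0.
Definition is_leaf (v : V) := (indeg v == 1) && (outdeg v == 0).
Definition is_split (v : V) := (indeg v == 1) && (2 <= outdeg v).
Definition is_hybrid (v : V) := (2 <= indeg v) && (1 <= outdeg v).

Definition uarc (u w : V) := arcN u w || arcN w u.

(* acyclic (this also excludes loops) *)
Definition dag := forall u w : V, arcN u w -> ~~ connect arcN w u.

Definition phylo_network :=
  [/\ dag,
      exists r : V, [/\ is_root r, 2 <= outdeg r & forall u, is_root u -> u = r],
      injective lfN,
      (forall v : V, is_leaf v <-> exists x, lfN x = v)
    & forall v : V, [\/ is_root v, is_leaf v, is_split v | is_hybrid v]].

Definition binary_network :=
  phylo_network /\
  forall v : V, [/\ is_root v -> outdeg v = 2,
                    is_split v -> outdeg v = 2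
                  & is_hybrid v -> indeg v = 2 /\ outdeg v = 1].

Definition induced (S : {set V}) : rel V :=
  [rel u w | [&& u \in S, w \in S & uarc u w]].
Definition sconnected (S : {set V}) :=
  forall u w, u \in S -> w \in S -> connect (induced S) u w.
Definition biconnected (S : {set V}) :=
  [/\ 2 <= #|S|, sconnected S & forall w, w \in S -> sconnected (S :\ w)].
Definition bicomponent (S : {set V}) :=
  biconnected S /\ forall T, biconnected T -> S \subset T -> T = S.

Definition binary_level1 :=
  [/\ binary_network,
      (forall S, bicomponent S -> #|[set h in S | is_hybrid h]| <= 1)
    & (* standing convention: every cycle of U(N) has >= 4 vertices,
         i.e. U(N) has no triangle *)
      forall a b c : V, uarc a b -> uarc b c -> uarc c a -> False].

Definition cut_arc (u w : V) :=
  arcN u w /\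
  ~ (forall a b : V,
       connect [rel x y | uarc x y && ~~ (((x == u) && (y == w)) || ((x == w) && (y == u)))] a b).

Definition Cl (v : V) : {set X} := [set x | connect arcN v (lfN x)].

(* directed path s = x0 -> x1 -> ... -> xk = t, given by p = [x1;...;xk] *)
Definition dpath (s t : V) (p : seq V) := path arcN s p && (last s p == t).
(* interior vertices of the path s :: p *)
Definition interior (p : seq V) := take (size p).-1 p.
Definition sdisj (p q : seq V) := all (fun x => x \notin q) p.

Definition consistent (a b c : X) : Prop :=
  [/\ a != b, a != c, b != c &
    exists (v w : V) (pc pw pa pb : seq V),
      [/\ v != w, dpath v (lfN c) pc, dpath v w pw, dpath w (lfN a) pa
        & dpath w (lfN b) pb] /\
      [/\ sdisj (interior pc) (interior pw), sdisj (interior pc) (interior pa),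
          sdisj (interior pc) (interior pb), sdisj (interior pw) (interior pa)
        & sdisj (interior pw) (interior pb) /\ sdisj (interior pa) (interior pb)]].
End Net.

(* SN-sets of a set of triplets R (xy|z in R  iff  R x y z) *)
Definition SNset (X : finType) (R : X -> X -> X -> Prop) (S : {set X}) :=
  forall x y z, R x y z -> x \in S -> z \in S -> y \in S.
Definition maximal_SNset (X : finType) (R : X -> X -> X -> Prop) (S : {set X}) :=
  [/\ SNset R S, S != setT &
      forall T, SNset R T -> T != setT -> S \subset T -> T = S].

(* Main.v *)
Require Import Defs.
From HB Require Import structures.
From mathcomp Require Import all_boot zify.
From Stdlib Require Import Classical.
Set Implicit Arguments. Unset Strict Implicit. Unset Printing Implicit Defensive.

Lemma measure_ind (T : Type) (f : T -> nat) (P : T -> Prop) :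
  (forall x, (forall y, f y < f x -> P y) -> P x) -> forall x, P x.
Proof.
move=> H x; move: {2}(f x) (leqnn (f x)) => n; elim: n x => [|n IH] x Hx;
  apply: H => y Hy.
  by have := leq_trans Hy Hx.
apply: IH; by have := leq_trans Hy Hx.
Qed.

Section Net.
Variables (X : finType) (N : network X).
Local Notation V := (vtx N).
Local Notation e := (@Defs.arc X N).
Local Notation lfN := (@lf X N).

Hypothesis Hdag : dag N.

Lemma acyc (a b : V) : connect e a b -> connect e b a -> a = b.
Proof.
case/connectP=> p Hp ->; case: p Hp => [//|y p] /= /andP[Ha Hp] Hc.
have := Hdag Ha; suff -> : connect e y a by [].
by apply: connect_trans (Hc); apply/connectP; exists p.
Qed.

Lemma arc_neq (a b : V) : e a b -> a != b.
Proof. by move=> H; apply/eqP=> Eab; have := Hdag H; rewrite Eab connect0. Qed.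

Lemma in_from (s t : V) p : path e s p -> t \in p -> connect e s t /\ t != s.
Proof.
elim: p s => [//|y p IH] s /= /andP[Hsy Hp]; rewrite inE => /orP[/eqP->|Ht].
  by split; [apply: connect1|rewrite eq_sym arc_neq].
have [Hyt _] := IH _ Hp Ht; split; first exact: connect_trans (connect1 Hsy) Hyt.
apply/eqP=> Ets; have := Hdag Hsy; by rewrite -Ets Hyt.
Qed.

Lemma in_to (s t : V) p : path e s p -> t \in p -> connect e t (last s p).
Proof.
elim: p s => [//|y p IH] s /= /andP[Hsy Hp]; rewrite inE => /orP[/eqP->|Ht].
  by apply/connectP; exists p.
exact: IH.
Qed.

Lemma path_uniq (s : V) p : path e s p -> uniq (s :: p).
Proof.
elim: p s => [//|y p IH] s Hp; have /andP[Hsy Hp'] := Hp.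
rewrite cons_uniq IH // andbT; apply/negP=> Hs.
by have [_] := in_from Hp Hs; rewrite eqxx.
Qed.

Lemma interiorP (s t : V) p : t \in p -> t != last s p -> t \in interior p.
Proof.
case/lastP: p => [//|q l]; rewrite /interior size_rcons /= last_rcons -cats1.
rewrite take_size_cat // mem_cat inE => /orP[//|/eqP->]; by rewrite eqxx.
Qed.

Lemma interior_sub (t : V) p : t \in interior p -> t \in p.
Proof. exact: mem_take. Qed.

Lemma minimal_elt (P : pred V) s0 : P s0 ->
  exists z, P z /\ forall t, P t -> connect e z t -> t = z.
Proof.
move: s0; apply: (@measure_ind V (fun z => #|[set y | connect e z y]|)
  (fun z => P z -> exists z0, P z0 /\ forall t, P t -> connect e z0 t -> t = z0)) => z IH Pz.
case: (boolP [exists t, [&& P t, connect e z t & t != z]]).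
  case/existsP=> t /and3P[Pt Hzt Htz]; apply: (IH t) => //.
  apply: proper_card; apply/properP; split.
    by apply/subsetP=> y; rewrite !inE => Hy; apply: connect_trans Hzt Hy.
  exists z; rewrite !inE ?connect0 //; apply/negP=> Htz'.
  by move/eqP: Htz; apply; apply: acyc.
move/existsPn=> H; exists z; split => // t Pt Hzt.
by have := H t; rewrite Pt Hzt /= negbK => /eqP.
Qed.


Hypothesis Hph : phylo_network N.

Lemma root_reach : exists r : V, forall t, connect e r t.
Proof.
have [_ [r [Rr _ Runiq]] _ _ _] := Hph.
exists r => t; move: t.
apply: (@measure_ind V (fun t => #|[set s | connect e s t]|) (fun t => connect e r t)) => t IH.
case: (boolP [exists p, e p t]).
  case/existsP=> p Hpt; apply: connect_trans (IH p _) (connect1 Hpt).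
  apply: proper_card; apply/properP; split.
    by apply/subsetP=> s; rewrite !inE => Hs; apply: connect_trans Hs (connect1 Hpt).
  by exists t; rewrite !inE ?connect0 //; apply: Hdag Hpt.
move/existsPn=> H; rewrite (Runiq t) ?connect0 //.
rewrite /is_root /indeg cards_eq0; apply/eqP/setP=> p; rewrite !inE; exact: negbTE (H p).
Qed.

Lemma outdeg0 (t : V) : (forall y, ~~ e t y) -> outdeg t = 0.
Proof.
move=> H; apply/eqP; rewrite cards_eq0; apply/eqP/setP=> p; rewrite !inE; exact: negbTE (H p).
Qed.

Lemma leaf_out x (y : V) : ~~ e (lfN x) y.
Proof.
have [_ _ _ Hl _] := Hph.
have /andP[_ /eqP H0] := (proj2 (Hl (lfN x))) (ex_intro _ x erefl).
apply/negP=> Hxy; move: H0 => /cards0_eq /setP /(_ y); by rewrite !inE Hxy.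
Qed.

Lemma out_gt0 (t : V) : 0 < outdeg t -> exists y, e t y.
Proof. by rewrite card_gt0 => /set0Pn[y]; rewrite inE; exists y. Qed.

Lemma reach_leaf (t : V) : exists x, connect e t (lfN x).
Proof.
have [_ [r [Rr Rout Runiq]] _ Hl Hcase] := Hph.
move: t; apply: (@measure_ind V (fun t => #|[set s | connect e t s]|)
  (fun t => exists x, connect e t (lfN x))) => t IH.
case: (boolP [exists y, e t y]).
  case/existsP=> y Hty.
  have Hlt : #|[set s | connect e y s]| < #|[set s | connect e t s]|.
    apply: proper_card; apply/properP; split.
      by apply/subsetP=> s; rewrite !inE => Hs; apply: connect_trans (connect1 Hty) Hs.
    by exists t; rewrite !inE ?connect0 //; apply: Hdag Hty.
  have [x Hx] := IH y Hlt.
  by exists x; apply: connect_trans (connect1 Hty) Hx.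
move/existsPn=> H; have H0 := outdeg0 H.
case: (Hcase t) => [Ht|Ht|/andP[_]|/andP[_]]; rewrite ?H0 //.
  by move: Rout; rewrite -(Runiq t Ht) H0.
have [x Hx] := (proj1 (Hl t)) Ht; by exists x; rewrite Hx connect0.
Qed.

Lemma cut_entry (u v : V) : cut_arc u v -> forall a b, e a b -> ~~ connect e v a ->
  connect e v b -> a = u /\ b = v.
Proof.
case=> Huv Hcut a b Hab Ha Hb.
apply: NNPP => Hne; apply: Hcut => s t.
set E := (X in connect X _ _).
have Esym : symmetric E.
  move=> x y; rewrite /E /= /uarc.
  by case: (e x y); case: (e y x); case: (x == u); case: (x == v); case: (y == u); case: (y == v).
have Ecs := sym_connect_sym Esym.
have uD : ~~ connect e v u by exact: Hdag Huv.
have Earc : forall x y, e x y -> ~~ ((x == u) && (y == v)) -> E x y.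
  move=> x y Hxy Hn; rewrite /E /= /uarc Hxy /= negb_or Hn /=.
  apply/negP => /andP[/eqP Exv /eqP Eyu]; subst.
  by have := Hdag Huv; rewrite connect1.
have Hout : forall p s, path e s p -> ~~ connect e v (last s p) -> connect E s (last s p).
  elim=> [|y p IH] s' /=; first by rewrite connect0.
  case/andP=> Hsy Hp Hl; apply: connect_trans (IH _ Hp Hl).
  apply: connect1; apply: Earc Hsy _; apply/negP=> /andP[_ /eqP Eyv]; subst y.
  by apply: (negP Hl); apply/connectP; exists p.
have Hin : forall p s, path e s p -> connect e v s -> connect E s (last s p).
  elim=> [|y p IH] s' /=; first by rewrite connect0.
  case/andP=> Hsy Hp Hvs; apply: connect_trans (IH _ Hp (connect_trans Hvs (connect1 Hsy))).
  apply: connect1; apply: Earc Hsy _; apply/negP=> /andP[/eqP Esu _]; subst s'.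
  by rewrite Hvs in uD.
have [r Hr] := root_reach.
have HDout : forall t, ~~ connect e v t -> connect E r t.
  by move=> t' Ht; case/connectP: (Hr t') => p Hp Ea; rewrite Ea; apply: Hout => //; rewrite -Ea.
have HDin : forall t, connect e v t -> connect E v t.
  by move=> t' Ht; case/connectP: Ht => p Hp Ea; rewrite Ea; apply: Hin Hp (connect0 _ _).
have Hall : forall t, connect E r t.
  move=> t'; case: (boolP (connect e v t')) => Ht; last exact: HDout.
  apply: connect_trans (HDout _ Ha) _; apply: connect_trans (HDin _ Ht).
  apply: connect_trans (connect1 (Earc _ _ Hab _)) _.
    by apply/negP=> /andP[/eqP Eau /eqP Ebv]; apply: Hne.
  by rewrite Ecs; apply: HDin.
by apply: connect_trans (Hall t); rewrite Ecs.
Qed.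

Lemma entry_path (u v : V) : cut_arc u v -> forall p s, path e s p -> ~~ connect e v s ->
  connect e v (last s p) -> (v \in p) /\ connect e s u.
Proof.
move=> Hcut; elim=> [|y p IH] s /=; first by move=> _ H1 H2; rewrite H2 in H1.
case/andP=> Hsy Hp Hs Hl; case: (boolP (connect e v y)) => Hy.
  have [Esu Eyv] := cut_entry Hcut Hsy Hs Hy.
  by split; [rewrite inE Eyv eqxx | rewrite Esu connect0].
have [H1 H2] := IH _ Hp Hy Hl.
by split; [rewrite inE H1 orbT | exact: connect_trans (connect1 Hsy) H2].
Qed.

Lemma SN_cut (u v : V) : cut_arc u v -> (exists y, e v y) -> SNset (consistent N) (Cl v).
Proof.
move=> Hcut [y0 Hvy0] x y z [Hxy Hxz Hyz [v0 [w [pc [pw [pa [pb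
  [[Hvw Hc Hw Ha Hb] [D1 D2 D3 D4 [D5 D6]]]]]]]]]] Hx Hz.
case: (boolP (y \in Cl v)) => // Hy; exfalso.
rewrite !inE in Hx Hz Hy.
have Hw' : ~~ connect e v w.
  apply/negP => Hvw'; apply: (negP Hy); case/andP: Hb => Hp /eqP <-.
  by apply: connect_trans Hvw' _; apply/connectP; exists pb.
have Hv0 : ~~ connect e v v0.
  apply/negP => Hvw'; apply: (negP Hw'); case/andP: Hw => Hp /eqP <-.
  by apply: connect_trans Hvw' _; apply/connectP; exists pw.
case/andP: Ha => Hpa /eqP Ea; case/andP: Hc => Hpc /eqP Ec.
have La : connect e v (last w pa) by rewrite Ea.
have Lc : connect e v (last v0 pc) by rewrite Ec.
have [Hva _] := entry_path Hcut Hpa Hw' La.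
have [Hvc _] := entry_path Hcut Hpc Hv0 Lc.
have Hvx : forall x', v != lfN x'.
  by move=> x'; apply/eqP=> E; move: Hvy0; rewrite E; apply/negP; apply: leaf_out.
have Iva : v \in interior pa by apply: (interiorP (s:=w) Hva); rewrite Ea Hvx.
have Ivc : v \in interior pc by apply: (interiorP (s:=v0) Hvc); rewrite Ec Hvx.
by move/allP: D2 => /(_ v Ivc); rewrite Iva.
Qed.


Lemma triplet (u v : V) : e u v -> forall a b c, a \in Cl v -> b \in Cl v -> a != b ->
  c \notin Cl v -> consistent N a b c.
Proof.
move=> Huv a b c Ha Hb Hab Hc; rewrite !inE in Ha Hb Hc.
have uD : ~~ connect e v u by exact: Hdag Huv.
split => //.
- by apply/eqP=> Eac; move: Hc; rewrite -Eac Ha.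
- by apply/eqP=> Ebc; move: Hc; rewrite -Ebc Hb.
pose P := [pred t | connect e v t && connect e t (lfN a) && connect e t (lfN b)].
have Pv : P v by rewrite /= connect0 Ha Hb.
have [w [/andP[/andP[Hvw Hwa] Hwb] Hwmin]] := minimal_elt Pv.
have [r Hr] := root_reach.
pose Q := [pred t | connect e t (lfN c) && connect e t u].
have Qr : Q r by rewrite /= !Hr.
have [z [/andP[Hzc Hzu] Hzmin]] := minimal_elt Qr.
have /connectP[pa Hpa Ea] := Hwa. have /connectP[pb Hpb Eb] := Hwb.
have /connectP[pc Hpc Ec] := Hzc. have /connectP[pu Hpu Eu] := Hzu.
have /connectP[pvw Hpvw Evw] := Hvw.
set pw := pu ++ v :: pvw.
have Hpw : path e z pw by rewrite /pw cat_path /= -Eu Hpu Huv Hpvw.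
have Ew : last z pw = w by rewrite /pw last_cat /= Evw.
exists z, w, pc, pw, pa, pb.
have pcD : forall t, t \in pc -> ~~ connect e v t.
  move=> t Ht; apply/negP=> Hvt; apply: (negP Hc); rewrite Ec.
  exact: connect_trans Hvt (in_to Hpc Ht).
have paD : forall t, t \in pa -> connect e v t.
  by move=> t Ht; apply: connect_trans Hvw (in_from Hpa Ht).1.
have pbD : forall t, t \in pb -> connect e v t.
  by move=> t Ht; apply: connect_trans Hvw (in_from Hpb Ht).1.
have pwW : forall t, t \in pw -> connect e t w by move=> t Ht; rewrite -Ew; apply: in_to Hpw Ht.
split; first split.
- apply/eqP=> Ezw; apply: (negP uD); apply: connect_trans Hvw _; by rewrite -Ezw.
- by rewrite /dpath Hpc -Ec eqxx.
- by rewrite /dpath Hpw Ew eqxx.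
- by rewrite /dpath Hpa -Ea eqxx.
- by rewrite /dpath Hpb -Eb eqxx.
split; try split; apply/allP => t /interior_sub Ht; apply/negP => /interior_sub Ht'.
- have tD := pcD t Ht; have [Hzt Htz] := in_from Hpc Ht.
  move: Ht'; rewrite /pw mem_cat inE => /orP[Htu|/orP[/eqP Etv|Htv]].
  + move/eqP: Htz; apply; apply: Hzmin Hzt.
    by rewrite /Q /= Ec Eu (in_to Hpc Ht) (in_to Hpu Htu).
  + by move: tD; rewrite Etv connect0.
  + by move: tD; rewrite (in_from Hpvw Htv).1.
- by move: (pcD t Ht); rewrite paD.
- by move: (pcD t Ht); rewrite pbD.
- have [Hwt Htw] := in_from Hpa Ht'; move/eqP: Htw; apply; apply: acyc => //; exact: pwW.
- have [Hwt Htw] := in_from Hpb Ht'; move/eqP: Htw; apply; apply: acyc => //; exact: pwW.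
- have [Hwt Htw] := in_from Hpa Ht; move/eqP: Htw; apply; apply: Hwmin Hwt.
  by rewrite /P /= (paD t Ht) Ea Eb (in_to Hpa Ht) (in_to Hpb Ht').
Qed.


Local Notation ua := (@uarc X N).

Lemma induced_sym (T : {set V}) : symmetric (induced T).
Proof.
move=> x y; rewrite /induced /= /uarc.
by case: (x \in T); case: (y \in T); case: (e x y); case: (e y x).
Qed.

Lemma path_conn (T : {set V}) s p : path ua s p -> (forall t, t \in s :: p -> t \in T) ->
  forall t, t \in s :: p -> connect (induced T) s t.
Proof.
elim: p s => [|y p IH] s Hp Hsub t.
  by rewrite inE => /eqP->; rewrite connect0.
rewrite inE => /orP[/eqP->|Ht]; first by rewrite connect0.
case/andP: Hp => Hsy Hp.
apply: connect_trans (IH y Hp _ t Ht).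
  apply: connect1; rewrite /induced /= Hsy !Hsub ?inE ?eqxx ?orbT //.
by move=> t' Ht'; apply: Hsub; rewrite inE Ht' orbT.
Qed.

Lemma cycle_biconn c : uniq c -> cycle ua c -> 2 <= size c -> biconnected [set t in c].
Proof.
move=> Hu Hc Hs; split.
- by rewrite cardsE (card_uniqP Hu).
- case: c Hu Hc Hs => [//|s q] Hu Hc Hs a b Ha Hb.
  have Hp : path ua s q by move: Hc; rewrite /= rcons_path => /andP[].
  have Hsub : forall t, t \in s :: q -> t \in [set t in s :: q] by move=> t Ht; rewrite in_set.
  rewrite in_set in Ha; rewrite in_set in Hb.
  apply: connect_trans (path_conn Hp Hsub Hb).
  rewrite (sym_connect_sym (@induced_sym _)). exact: (path_conn Hp Hsub Ha).
- move=> w; rewrite inE => Hw; case: (rot_to Hw) => i q Hrot.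
  have Hc' : cycle ua (w :: q) by rewrite -Hrot rot_cycle.
  have Hu' : uniq (w :: q) by rewrite -Hrot rot_uniq.
  have memq : forall t, (t \in [set t in c] :\ w) = (t \in q).
    move=> t; rewrite !inE -(mem_rot i) Hrot inE.
    case: (eqVneq t w) => [->|] //=; by move: Hu' => /= /andP[/negbTE-> _].
  move=> a b; rewrite !memq.
  case: q Hrot Hc' Hu' memq => [//|h q] Hrot Hc' Hu' memq Ha Hb.
  have Hp : path ua h q by move: Hc'; rewrite /= rcons_path => /andP[_ /andP[]].
  have Hsub : forall t, t \in h :: q -> t \in [set t in c] :\ w by move=> t; rewrite memq.
  apply: connect_trans (path_conn Hp Hsub Hb).
  by rewrite (sym_connect_sym (@induced_sym _)); exact: (path_conn Hp Hsub Ha).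
Qed.

Lemma exists_bicomp (S : {set V}) : biconnected S -> exists T, bicomponent T /\ S \subset T.
Proof.
move: S; apply: (@measure_ind _ (fun S : {set V} => #|V| - #|S|)
  (fun S => biconnected S -> exists T, bicomponent T /\ S \subset T)) => S IH HS.
case: (classic (bicomponent S)) => [HbS|HnS]; first by exists S; rewrite subxx.
have : exists T, biconnected T /\ S \subset T /\ T <> S.
  apply: NNPP => Hn; apply: HnS; split=> // T HT HST; apply: NNPP => HTS; apply: Hn.
  by exists T.
case=> T [HT [HST HTS]].
have Hprop : S \proper T.
  by rewrite properEneq HST andbT; apply/eqP => E; apply: HTS; rewrite E.
have [|T' [HT' HTT']] := IH T _ HT.
  have H1 := proper_card Hprop; have H2 : #|T| <= #|V| := max_card _; lia.
by exists T'; split => //; apply: subset_trans HST HTT'.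
Qed.

Lemma not_setT (u v : V) : binary_network N ->
  (forall S : {set V}, bicomponent S -> #|[set h in S | is_hybrid h]| <= 1) ->
  cut_arc u v -> Cl v != setT.
Proof.
move=> [_ Hbin] Hlev Hcut.
have [_ _ _ Hl Hcase] := Hph.
apply/negP=> /eqP HT.
have allD : forall x, connect e v (lfN x).
  move=> x; have : x \in Cl v by rewrite HT inE. 
  by rewrite inE.
have [Huv _] := Hcut.
have uD : ~~ connect e v u by exact: Hdag Huv.
have reachu : forall t, ~~ connect e v t -> connect e t u.
  move=> t Ht; have [x Hx] := reach_leaf t; case/connectP: Hx => p Hp Ex.
  have Lp : connect e v (last t p) by rewrite -Ex.
  by have [_ ->] := entry_path Hcut Hp Ht Lp.
have hyb_of : forall t w, e t w -> (forall y, e t y -> y = w) -> is_hybrid t.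
  move=> t w Htw Hch.
  have Ho : outdeg t <= 1.
    rewrite -(cards1 w); apply: subset_leq_card; apply/subsetP=> y; rewrite !inE.
    by move/Hch=> ->.
  case: (Hcase t) => [Ht|Ht|Ht|//].
  + by have [H1 _ _] := Hbin t; move: Ho; rewrite H1.
  + case/andP: Ht => _ /eqP /cards0_eq /setP /(_ w); by rewrite !inE Htw.
  + by have [_ H1 _] := Hbin t; move: Ho; rewrite H1.
have uch : forall y, e u y -> y = v.
  move=> y Huy; apply/eqP; apply: contraT => Hyv.
  case: (boolP (connect e v y)) => Hy.
    by have [_ Eyv] := cut_entry Hcut Huy uD Hy; rewrite Eyv eqxx in Hyv.
  by have := Hdag Huy; rewrite reachu.
have Hu : is_hybrid u := hyb_of _ _ Huv uch.
have [Hiu _] : indeg u = 2 /\ outdeg u = 1 by have [_ _ H1] := Hbin u; apply: H1.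
have [r Hr] := root_reach.
have rD : ~~ connect e v r.
  by apply/negP=> Hvr; apply: (negP uD); apply: connect_trans Hvr (Hr u).
have ru : r != u.
  apply/eqP=> Eru; have : 0 < indeg u by rewrite Hiu.
  rewrite card_gt0 => /set0Pn[p]; rewrite inE => Hpu.
  by have := Hdag Hpu; rewrite -Eru Hr.
pose P := [pred t | ~~ connect e v t && (t != u)].
have Pr : P r by rewrite /= rD ru.
have [x [/andP[xD xu] Hxmin]] := minimal_elt Pr.
have xch : forall y, e x y -> y = u.
  move=> y Hxy; case: (boolP (connect e v y)) => Hy.
    by have [Exu _] := cut_entry Hcut Hxy xD Hy; rewrite Exu eqxx in xu.
  apply/eqP; apply: contraT => Hyu.
  have Eyx := Hxmin y (introT andP (conj Hy Hyu)) (connect1 Hxy).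
  by move: Hxy; rewrite Eyx => /arc_neq; rewrite eqxx.
have Hxu : e x u.
  have /connectP[p Hp Ep] := reachu x xD.
  case: p Hp Ep => [_ Ex|y p]; first by rewrite Ex eqxx in xu.
  by case/andP=> Hxy _ _; rewrite -(xch y Hxy).
have Hx : is_hybrid x := hyb_of _ _ Hxu xch.
have [p Hpu Hpx] : exists2 p, e p u & p != x.
  have := cardsD1 x [set t | e t u]; rewrite inE Hxu -/(indeg u) Hiu add1n => -[] /esym.
  move=> H1; have : 0 < #|[set t | e t u] :\ x| by rewrite H1.
  by rewrite card_gt0 => /set0Pn[p]; rewrite !inE => /andP[Hpx Hpu]; exists p.
pose Q := [pred t | connect e t p && connect e t x].
have Qr : Q r by rewrite /= !Hr.
have [z [/andP[Hzp Hzx] Hzmin]] := minimal_elt Qr.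
have /connectP[pp Hpp Ep] := Hzp. have /connectP[px Hpx' Ex] := Hzx.
pose c := z :: pp ++ u :: rev px.
have Huni : uniq c.
  have zpp : z \notin pp by apply/negP=> H; have [_] := in_from Hpp H; rewrite eqxx.
  have zpx : z \notin px by apply/negP=> H; have [_] := in_from Hpx' H; rewrite eqxx.
  have zu : z != u by apply/eqP=> Ezu; have := Hdag Hpu; rewrite -Ezu Hzp.
  have upp : u \notin pp.
    by apply/negP=> H; have := in_to Hpp H; rewrite -Ep => Hup; have := Hdag Hpu; rewrite Hup.
  have upx : u \notin px.
    by apply/negP=> H; have := in_to Hpx' H; rewrite -Ex => Hux; have := Hdag Hxu; rewrite Hux.
  have dis : ~~ has (mem pp) px.
    apply/hasPn => t Ht; apply/negP => Ht' /=.
    have [Hzt Htz] := in_from Hpp Ht'.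
    move/eqP: Htz; apply; apply: Hzmin Hzt.
    by rewrite /Q /= Ep Ex (in_to Hpp Ht') (in_to Hpx' Ht).
  have upp' : uniq pp by move: (path_uniq Hpp); rewrite cons_uniq => /andP[].
  have upx' : uniq px by move: (path_uniq Hpx'); rewrite cons_uniq => /andP[].
  rewrite /c cons_uniq; apply/andP; split.
    by rewrite mem_cat negb_or zpp /= in_cons negb_or zu mem_rev zpx.
  rewrite cat_uniq upp' /=; apply/andP; split.
    by rewrite negb_or upp has_rev dis.
  by rewrite mem_rev upx rev_uniq upx'.
have Hcyc : cycle ua c.
  have sub1 : subrel e ua by move=> a b H; rewrite /uarc H.
  rewrite /c /= rcons_cat cat_path /= (sub_path sub1 Hpp) /= -Ep /uarc Hpu /=.
  move: (rev_path ua z (rcons px u)); rewrite last_rcons belast_rcons rev_cons => ->.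
  apply: (sub_path (e := e)); first by move=> a b H; rewrite /uarc H orbT.
  by rewrite rcons_path Hpx' -Ex Hxu.
have Hsz : 2 <= size c by rewrite /c /= size_cat /= addnS.
have [T [HT0 HcT]] := exists_bicomp (cycle_biconn Huni Hcyc Hsz).
have := Hlev T HT0.
have xT : x \in T.
  apply: (subsetP HcT); rewrite inE.
  have : x \in z :: px by rewrite Ex mem_last.
  rewrite inE => /orP[/eqP->|H]; first by rewrite /c inE eqxx.
  by rewrite /c !inE mem_cat inE mem_rev H !orbT.
have uT : u \in T by apply: (subsetP HcT); rewrite /c !inE mem_cat inE eqxx !orbT.
suff : 2 <= #|[set h in T | is_hybrid h]| by move=> H1 H2; have := leq_trans H1 H2.
apply: (@leq_trans #|[set x; u]|); first by rewrite cards2 xu.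
apply: subset_leq_card; apply/subsetP=> t; rewrite !inE.
by case/orP=> /eqP->; rewrite ?xT ?uT.
Qed.

End Net.

Theorem mainTheorem6 (X : finType) (N N' : network X) (v : vtx N) (v' : vtx N') :
  3 <= #|X| ->
  binary_level1 N -> binary_level1 N' ->
  (forall a b c : X, consistent N a b c -> consistent N' a b c) ->
  is_split v -> (exists u, cut_arc u v) ->
  is_split v' -> (exists u', cut_arc u' v') ->
  [\/ Cl v :&: Cl v' = set0, Cl v :&: Cl v' = Cl v | Cl v :&: Cl v' = Cl v'] /\
  (Cl v \proper Cl v' -> ~ maximal_SNset (consistent N) (Cl v)).
Proof.
move=> _ L1 L2 Hinc Hv [u Hcut] Hv' [u' Hcut'].
have [[Hph Hbin] Hlev _] := L1.
have [[Hph' Hbin'] Hlev' _] := L2.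
have Hdag : dag N by case: Hph.
have Hdag' : dag N' by case: Hph'.
have Hex' : exists y, Defs.arc v' y.
  case/andP: Hv' => _ H2; have : 0 < outdeg v' by apply: leq_trans H2.
  by rewrite card_gt0 => /set0Pn[y]; rewrite inE; exists y.
have SN' := SN_cut Hdag' Hph' Hcut' Hex'.
have SNB : SNset (consistent N) (Cl v') := fun x y z H => SN' x y z (Hinc x y z H).
split.
- case: (boolP (Cl v \subset Cl v')) => [H|H]; first by apply: Or32; apply/setIidPl.
  case: (boolP (Cl v' \subset Cl v)) => [H'|H']; first by apply: Or33; apply/setIidPr.
  case: (eqVneq (Cl v :&: Cl v') set0) => [E|Hne]; first by apply: Or31.
  exfalso; have /set0Pn[b] := Hne; rewrite inE => /andP[Hb Hb'].
  have [a Ha Ha'] := subsetPn H.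
  have [c Hc Hc'] := subsetPn H'.
  have Hba : b != a by apply/eqP => E; move: Ha'; rewrite -E Hb'.
  have T := triplet Hdag Hph Hcut.1 Hb Ha Hba Hc'.
  by have := SN' b a c (Hinc _ _ _ T) Hb' Hc; rewrite (negbTE Ha').
- move=> Hprop [HA HAT Hmax].
  have E := Hmax (Cl v') SNB (not_setT Hdag' Hph' (conj Hph' Hbin') Hlev' Hcut') (proper_sub Hprop).
  by move: Hprop; rewrite E properxx.
Qed.
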